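(* Let $\Lambda\colon L\times W\to[0,\infty]$ and $\Lambda'\colon L'\times W'\to[0,\infty]$ be Dowker dissimilarities that are $(\alpha,\alpha')$-interleaved (as Dowker dissimilarities). Then the Dowker nerves $N\Lambda$ and $N\Lambda'$ are $(\alpha,\alpha')$-interleaved filtered simplicial complexes.
   Context: A Dowker dissimilarity is a function $\Lambda\colon L\times W\to[0,\infty]$ for sets $L,W$. Its Dowker nerve $N\Lambda$ is the filtered simplicial complex with vertex set $L$ whose level $t\in[0,\infty]$ is $N\Lambda_t=\{\text{finite }\sigma\subseteq L\mid \exists w\in W \text{ with }\Lambda(l,w)<t\ \forall l\in\sigma\}$. Let $\alpha,\alpha'\colon[0,\infty]\to[0,\infty]$ be order preserving with $t\le\alpha(t)$, $t\le\alpha'(t)$ for all $t$. An $(\alpha,\alpha')$-interleaving of Dowker dissimilarities $\Lambda,\Lambda'$ is a pair of relations $C\subseteq L\times L'$, $C'\subseteq L'\times L$ such that: (i) for every $t$ and every nonempty $\sigma\in N\Lambda_t$, the set $C(\sigma)=\{l'\mid\exists l\in\sigma,(l,l')\in C\}$ is finite, nonempty and lies in $N\Lambda'_{\alpha(t)}$; (ii) for every $t$ and every nonempty $\tau\in N\Lambda'_t$, $C'(\tau)$ is finite, nonempty and lies in $N\Lambda_{\alpha'(t)}$; (iii) $\Delta_L\subseteq C'\circ C$ and $\Delta_{L'}\subseteq C\circ C'$, where $C'\circ C=\{(l,m)\mid\exists l':(l,l')\in C,(l',m)\in C'\}$ and $\Delta$ denotes the diagonal. Filtered simplicial complexes $K,K'$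 (i.e. $K(s)\subseteq K(t)$ subcomplexes for $s\le t$) are $(\alpha,\alpha')$-interleaved if there are continuous maps $F_t\colon|K(t)|\to|K'(\alpha(t))|$ and $G_t\colon|K'(t)|\to|K(\alpha'(t))|$ for all $t$ ($|\cdot|$ = geometric realization) such that for $s\le t$, $F_t$ composed with the inclusion $|K(s)|\to|K(t)|$ is homotopic to $F_s$ composed with the inclusion $|K'(\alpha(s))|\to|K'(\alpha(t))|$ (and likewise for $G$), $G_{\alpha(t)}\circ F_t$ is homotopic to the inclusion $|K(t)|\to|K(\alpha'(\alpha(t)))|$, and $F_{\alpha'(t)}\circ G_t$ is homotopic to the inclusion $|K'(t)|\to|K'(\alpha(\alpha'(t)))|$. *)

(* Defs.v *)
From HB Require Import structures.
From mathcomp Require Import all_boot all_order all_algebra.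
From mathcomp Require Import all_classical all_reals.
From mathcomp Require Import topology normedtype.
Import numFieldNormedType.Exports.
Set Implicit Arguments. Unset Strict Implicit. Unset Printing Implicit Defensive.
Import Order.TTheory GRing.Theory Num.Theory.
Local Open Scope classical_set_scope.
Local Open Scope ring_scope.

Section Realization.
Variables (R : realType) (V : Type).

Definition supp (x : V -> R) : set V := [set v | x v != 0].

Definition in_real (K : set (set V)) (x : V -> R) : Prop :=
  [/\ forall v, 0 <= x v, finite_set (supp x), K (supp x) &
      \sum_(v \in (supp x : set {classic V})) x v = 1].

Definition real_pt (K : set (set V)) := {classic {x : V -> R | in_real K x}}.

Section Weak.
Variable K : set (set V).

(* the coherent ("weak") topology: U is open iff for every simplex s of K,
   U meets the closed simplex |s| in a set open for the Euclidean topology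
   of |s| (here expressed by the sup-norm on the finitely many coordinates). *)
Definition weak_open (U : set (real_pt K)) : Prop :=
  forall (s : set V), K s -> forall x : real_pt K, U x -> supp (sval x) `<=` s ->
  exists2 e : R, 0 < e & forall y : real_pt K, supp (sval y) `<=` s ->
    (forall v, s v -> `|sval y v - sval x v| < e) -> U y.

Lemma weak_openT : weak_open setT.
Proof. by move=> s _ x _ _; exists 1 => //. Qed.

Lemma weak_openI : setI_closed weak_open.
Proof.
move=> A B oA oB s Ks x [Ax Bx] sx.
have [e1 e10 h1] := oA s Ks x Ax sx.
have [e2 e20 h2] := oB s Ks x Bx sx.
exists (Num.min e1 e2); first by rewrite lt_min e10 e20.
move=> y sy hy; split.
- by apply: h1 => // v sv; have := hy v sv; rewrite lt_min => /andP[].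
- by apply: h2 => // v sv; have := hy v sv; rewrite lt_min => /andP[].
Qed.

Lemma weak_open_bigU (I : Type) (f : I -> set (real_pt K)) :
  (forall i, weak_open (f i)) -> weak_open (\bigcup_i f i).
Proof.
move=> hf s Ks x [i _ fxi] sx.
have [e e0 h] := hf i s Ks x fxi sx.
by exists e => // y sy hy; exists i => //; apply: h.
Qed.

HB.instance Definition _ := Choice.on (real_pt K).
HB.instance Definition _ :=
  isOpenTopological.Build (real_pt K) weak_openT weak_openI weak_open_bigU.

End Weak.

Definition incl (K1 K2 : set (set V)) (h : K1 `<=` K2) :
    real_pt K1 -> real_pt K2 :=
  fun x => exist (in_real K2) (sval x)
    (let: And4 a b c d := svalP x in And4 a b (h _ c) d).

End Realization.

Definition homotopic (R : realType) (X Y : topologicalType) (f g : X -> Y) : Prop :=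
  exists H : (X * R)%type -> Y,
    [/\ {within ([set: X] `*` `[0%R, 1%R] : set (X * R)%type), continuous H},
        forall x, H (x, 0%R) = f x & forall x, H (x, 1%R) = g x].

Record filtered (R : realType) (V : Type) := Filtered {
  fc :> \bar R -> set (set V);
  fc_fin : forall t s, fc t s -> finite_set s;
  fc_down : forall t s s', fc t s -> s' `<=` s -> fc t s';
  fc_mono : forall (t u : \bar R), (t <= u)%E -> fc t `<=` fc u }.

Definition fc_interleaved (R : realType) (V V' : Type)
  (alpha alpha' : \bar R -> \bar R)
  (ha : forall t, (t <= alpha t)%E) (ha' : forall t, (t <= alpha' t)%E)
  (ma : forall s t, (s <= t)%E -> (alpha s <= alpha t)%E)
  (ma' : forall s t, (s <= t)%E -> (alpha' s <= alpha' t)%E)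
  (K : filtered R V) (K' : filtered R V') : Prop :=
  exists (F : forall t, real_pt R (K t) -> real_pt R (K' (alpha t)))
         (G : forall t, real_pt R (K' t) -> real_pt R (K (alpha' t))),
  (forall t, continuous (F t)) /\ (forall t, continuous (G t)) /\
  [/\ 
      forall s t (h : (s <= t)%E),
        homotopic R (F t \o incl (@fc_mono _ _ K _ _ h))
                    (incl (@fc_mono _ _ K' _ _ (ma s t h)) \o F s),
      forall s t (h : (s <= t)%E),
        homotopic R (G t \o incl (@fc_mono _ _ K' _ _ h))
                    (incl (@fc_mono _ _ K _ _ (ma' s t h)) \o G s),
      (forall t, homotopic R (G (alpha t) \o F t)
                    (incl (@fc_mono _ _ K _ _ (le_trans (ha t) (ha' (alpha t)))))) &
      (forall t, homotopic R (F (alpha' t) \o G t)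
                    (incl (@fc_mono _ _ K' _ _ (le_trans (ha' t) (ha (alpha' t))))))].

Definition dnerve (R : realType) (L W : Type) (Lam : L -> W -> \bar R)
  (t : \bar R) : set (set L) :=
  [set s | finite_set s /\ exists w, forall l, s l -> (Lam l w < t)%E].

Lemma dnerve_fin (R : realType) (L W : Type) (Lam : L -> W -> \bar R) t s :
  dnerve Lam t s -> finite_set s.
Proof. by case. Qed.

Lemma dnerve_down (R : realType) (L W : Type) (Lam : L -> W -> \bar R) t s s' :
  dnerve Lam t s -> s' `<=` s -> dnerve Lam t s'.
Proof.
move=> [fs [w hw]] ss; split; first exact: sub_finite_set fs.
by exists w => l /ss; apply: hw.
Qed.

Lemma dnerve_mono (R : realType) (L W : Type) (Lam : L -> W -> \bar R)
  (t u : \bar R) : (t <= u)%E -> dnerve Lam t `<=` dnerve Lam u.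
Proof.
move=> tu s [fs [w hw]]; split => //; exists w => l /hw h.
exact: lt_le_trans h tu.
Qed.

Definition Dowker_nerve (R : realType) (L W : Type) (Lam : L -> W -> \bar R) :
  filtered R L :=
  Filtered (@dnerve_fin R L W Lam) (@dnerve_down R L W Lam)
           (@dnerve_mono R L W Lam).

Definition rimage (A B : Type) (C : A -> B -> Prop) (s : set A) : set B :=
  [set b | exists2 a, s a & C a b].

Definition dowker_interleaving (R : realType) (L W L' W' : Type)
  (alpha alpha' : \bar R -> \bar R)
  (Lam : L -> W -> \bar R) (Lam' : L' -> W' -> \bar R)
  (C : L -> L' -> Prop) (C' : L' -> L -> Prop) : Prop :=
  [/\ forall t s, dnerve Lam t s -> s !=set0 ->
        [/\ finite_set (rimage C s), rimage C s !=set0 &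
            dnerve Lam' (alpha t) (rimage C s)],
      forall t s, dnerve Lam' t s -> s !=set0 ->
        [/\ finite_set (rimage C' s), rimage C' s !=set0 &
            dnerve Lam (alpha' t) (rimage C' s)],
      (forall l, exists l', C l l' /\ C' l' l) &
      (forall l', exists l, C' l' l /\ C l l')].

Definition dowker_interleaved (R : realType) (L W L' W' : Type)
  (alpha alpha' : \bar R -> \bar R)
  (Lam : L -> W -> \bar R) (Lam' : L' -> W' -> \bar R) : Prop :=
  exists C C', dowker_interleaving alpha alpha' Lam Lam' C C'.

(* Main.v *)
Require Import Defs.
From HB Require Import structures.
From mathcomp Require Import all_boot all_order all_algebra.
From mathcomp Require Import all_classical all_reals.
From mathcomp Require Import topology normedtype.
From mathcomp Require finmap.
From mathcomp Require Import lra.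

Module Helpers.
Import numFieldNormedType.Exports.
Set Implicit Arguments. Unset Strict Implicit. Unset Printing Implicit Defensive.
Import Order.TTheory GRing.Theory Num.Theory.
Local Open Scope classical_set_scope.
Local Open Scope ring_scope.

Section Basic.
Variables (R : realType) (V : Type) (K : set (set V)).

Lemma rp_eq (a b : real_pt R K) : sval a = sval b -> a = b.
Proof. case: a b => [a ha] [b hb] /= eab; subst b; congr exist; exact: Prop_irrelevance. Qed.

Lemma rp_ne0 (x : real_pt R K) : exists v, supp (sval x) v.
Proof.
case: x => x [_ _ _ hs] /=; apply/not_existsP => hn.
have e : (supp x : set {classic V}) = set0 by apply/seteqP; split => // v /hn.
by move: hs; rewrite e fsbig_set0 => /eqP; rewrite eq_sym oner_eq0.
Qed.

Lemma rp_01 (x : real_pt R K) v : 0 <= sval x v <= 1.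
Proof.
case: x => x [h0 hf _ hs] /=; rewrite h0 /=.
have [sv|nsv] := pselect (supp x v); last first.
  by move: nsv; rewrite /supp /= => /negP; rewrite negbK => /eqP ->.
rewrite -hs (fsbigD1 (v : {classic V})) //= lerDl fsumr_ge0 // => i _; exact: h0.
Qed.

End Basic.


Lemma supp0 (R : realType) (T : Type) (x : T -> R) u : ~ supp x u -> x u = 0.
Proof. by rewrite /supp /= => /negP; rewrite negbK => /eqP. Qed.

Section Push.
Variables (R : realType) (V V' : Type) (h : V -> V').

Definition push (x : V -> R) : V' -> R := fun v =>
  \sum_(u \in (supp x : set {classic V})) (if `[< h u = v >] then x u else 0).

Lemma push_supp x : supp (push x) `<=` h @` supp x.
Proof.
move=> v pv; apply: contrapT => nv; move: pv; rewrite /supp /= /push fsbig1 ?eqxx //.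
move=> u su; case: asboolP => // e; exfalso; apply: nv; by exists u.
Qed.

Lemma push_ge0 x : (forall u, 0 <= x u) -> forall v, 0 <= push x v.
Proof.
move=> h0 v; apply: fsumr_ge0 => u _; case: asboolP => // _.
Qed.


Lemma push_sum x : finite_set (supp x) ->
  \sum_(v \in (supp (push x) : set {classic V'})) push x v =
  \sum_(u \in (supp x : set {classic V})) x u.
Proof.
move=> fx.
have fi : finite_set (h @` supp x : set {classic V'}) by apply: finite_image.
rewrite (fsbig_widen _ (h @` supp x : set {classic V'})) //; last first.
  - by move=> v [_ hv]; apply: supp0.
  - by move=> v; apply: push_supp.
rewrite /push exchange_fsbig //; apply: eq_fsbigr => u.
rewrite inE => su.
rewrite (fsbigD1 (h u : {classic V'})) //=; last by exists u.
rewrite fsbig1 ?addr0; first by case: asboolP.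
move=> v [_ /= nv]; case: asboolP => // e; exfalso; apply: nv; by rewrite e.
Qed.

Lemma push_real (K : set (set V)) (K' : set (set V')) x :
  in_real K x -> K' (supp (push x)) -> in_real K' (push x).
Proof.
case=> h0 hf _ hs hK; split => //; first exact: push_ge0.
  by apply: sub_finite_set (push_supp (x:=x)) _; apply: finite_image.
by rewrite push_sum.
Qed.

Lemma sum_const_seq (T : Type) (r : seq T) (c : R) :
  \sum_(u <- r) c = c * (size r)%:R.
Proof.
elim: r => [|a r IH]; first by rewrite big_nil mulr0.
by rewrite big_cons IH /= -add1n natrD mulrDr mulr1.
Qed.

Lemma push_widen x (s : set {classic V}) v : finite_set s -> supp x `<=` s ->
  push x v = \sum_(u <- (finmap.enum_fset (fset_set s))) (if `[< h u = v >] then x u else 0).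
Proof.
move=> fs sx; rewrite /push -fsbig_finite //.
apply: fsbig_widen => // u [_ hu] /=; rewrite (supp0 hu); by case: asboolP.
Qed.

Lemma push_est (s : set {classic V}) (x y : V -> R) (d : R) v :
  finite_set s -> supp x `<=` s -> supp y `<=` s ->
  (forall u, s u -> `|y u - x u| < d) ->
  `|push y v - push x v| <= d * (size (finmap.enum_fset (fset_set s)))%:R.
Proof.
move=> fs sx sy hd; rewrite (push_widen v fs sx) (push_widen v fs sy).
rewrite -sumrB -sum_const_seq; apply: le_trans (ler_norm_sum _ _ _) _.
rewrite big_seq [X in _ <= X]big_seq; apply: ler_sum => u.
rewrite in_fset_set // inE => su.
case: asboolP => _; last by rewrite subrr normr0; apply: le_trans (ltW (hd u su)).
exact: ltW (hd u su).
Qed.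

End Push.


Lemma est (R : realType) (a b a' b' c c' e : R) : 0<=a<=1 -> 0<=b<=1 -> 0<=c<=1 -> 0<=c'<=1 -> `|a'-a| < e -> `|b'-b| < e -> `|c - c'| < e -> `|((1-c')*a' + c'*b') - ((1-c)*a + c*b)| < 3*e.
Proof.
move=> /andP[? ?] /andP[? ?] /andP[? ?] /andP[? ?].
rewrite !ltr_norml => /andP[? ?] /andP[? ?] /andP[? ?].
apply/andP; split; nra.
Qed.

Section Topo.
Variables (R : realType) (V V' : Type) (K : set (set V)) (K' : set (set V')).

Definition lcont (phi : real_pt R K -> real_pt R K') :=
  forall s, K s -> forall x : real_pt R K, supp (sval x) `<=` s ->
  forall e : R, 0 < e -> exists2 d : R, 0 < d &
  forall y : real_pt R K, supp (sval y) `<=` s ->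
    (forall u, s u -> `|sval y u - sval x u| < d) ->
    forall v, `|sval (phi y) v - sval (phi x) v| < e.

Definition lsupp (phi0 phi1 : real_pt R K -> real_pt R K') :=
  forall s, K s -> s !=set0 -> exists2 s', K' s' &
  forall x : real_pt R K, supp (sval x) `<=` s ->
    supp (sval (phi0 x)) `<=` s' /\ supp (sval (phi1 x)) `<=` s'.

Lemma ne_of (x : real_pt R K) s : supp (sval x) `<=` s -> s !=set0.
Proof. by move=> sx; have [v sv] := rp_ne0 x; exists v; apply: sx. Qed.

Lemma cont_of (phi : real_pt R K -> real_pt R K') : lcont phi -> lsupp phi phi -> continuous phi.
Proof.
move=> hc hs; apply/continuousP => U oU.
suff : @weak_open R V K (phi @^-1` U) by [].
have {}oU : @weak_open R V' K' U := oU.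
move=> s Ks x Ux sx.
have [s' Ks' hss] := hs s Ks (ne_of sx).
have [e e0 he] := oU s' Ks' (phi x) Ux (hss x sx).1.
have [d d0 hd] := hc s Ks x sx e e0.
exists d => // y sy hy; apply: he; first exact: (hss y sy).1.
by move=> v _; apply: hd.
Qed.

Lemma lcont_push (h : V -> V') (phi : real_pt R K -> real_pt R K') : (forall s, K s -> finite_set s) ->
  (forall x, sval (phi x) = push h (sval x)) -> lcont phi.
Proof.
move=> hf hp s Ks x sx e e0.
pose n : R := (size (finmap.enum_fset (fset_set (s : set {classic V}))))%:R.
have n0 : 0 <= n by [].
exists (e / (n + 1)); first by rewrite divr_gt0 // ltr_wpDl.
move=> y sy hy v; rewrite !hp.
apply: le_lt_trans (push_est h v (hf s Ks) sx sy hy) _.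
rewrite -/n mulrAC ltr_pdivrMr ?ltr_wpDl // ltr_pM2l //; lra.
Qed.

End Topo.

Lemma lcont_val (R : realType) (V : Type) (K K' : set (set V)) (phi : real_pt R K -> real_pt R K') : (forall x, sval (phi x) = sval x) -> lcont phi.
Proof.
move=> hp s Ks x sx e e0; exists e => // y sy hy v; rewrite !hp.
have [sv|nsv] := pselect (s v); first exact: hy.
by rewrite (supp0 (fun h => nsv (sx _ h))) (supp0 (fun h => nsv (sy _ h))) subrr normr0.
Qed.


Lemma lcont_comp (R : realType) (V1 V2 V3 : Type) (K1 : set (set V1))
  (K2 : set (set V2)) (K3 : set (set V3))
  (phi : real_pt R K1 -> real_pt R K2) (psi : real_pt R K2 -> real_pt R K3) :
  lcont phi -> lsupp phi phi -> lcont psi -> lcont (psi \o phi).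
Proof.
move=> hp hs hq s Ks x sx e e0.
have [s' Ks' hss] := hs s Ks (ne_of sx).
have [d1 d10 hd1] := hq s' Ks' (phi x) (hss x sx).1 e e0.
have [d d0 hd] := hp s Ks x sx d1 d10.
exists d => // y sy hy; apply: hd1; first exact: (hss y sy).1.
by move=> u _; apply: hd.
Qed.


Section Clamp.
Variable R : realType.
Definition clamp (r : R) : R := Num.max 0 (Num.min r 1).
Lemma clampE r : clamp r = if r < 0 then 0 else if r < 1 then r else 1.
Proof.
rewrite /clamp /Num.max /Num.min /Order.max /Order.min.
case: (ltP r 1) => h1; case: (ltP r 0) => h0 /=; try (case: ifP => /=; lra); try lra.
Qed.
Lemma clamp01 r : 0 <= clamp r <= 1.
Proof. rewrite clampE; case: ltP => h1; first lra; case: ltP => h2; lra. Qed.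
Lemma clamp_lip r r' : `|clamp r - clamp r'| <= `|r - r'|.
Proof.
rewrite !clampE; case: (ltP r 0) => h1; case: (ltP r 1) => h2;
 case: (ltP r' 0) => h3; case: (ltP r' 1) => h4;
 (case: (leP 0 (r - r')) => h5; [rewrite (ger0_norm h5) | rewrite (ltr0_norm h5)]);
 rewrite /= ?ler_norml; try (apply/andP; split); try lra.

Qed.
Lemma clamp0 : clamp 0 = 0. Proof. rewrite clampE; case: ltP => //; case: ltP => //; lra. Qed.
Lemma clamp1 : clamp 1 = 1. Proof. rewrite clampE ltxx; case: ltP => //; lra. Qed.
End Clamp.

Section Homotopy.
Variables (R : realType) (V V' : Type) (K : set (set V)) (K' : set (set V')).
Variables (phi0 phi1 : real_pt R K -> real_pt R K').
Hypothesis hdown : forall s s', K' s -> s' `<=` s -> K' s'.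
Hypothesis hs : lsupp phi0 phi1.
Hypothesis hc0 : lcont phi0.
Hypothesis hc1 : lcont phi1.

Definition comb (r : R) (a b : V' -> R) : V' -> R :=
  fun v => (1 - clamp r) * a v + clamp r * b v.

Lemma comb_supp r a b : supp (comb r a b) `<=` supp a `|` supp b.
Proof.
move=> v; apply: contraPP => /not_orP [ha hb].
by rewrite /supp /comb /= (supp0 ha) (supp0 hb) !mulr0 addr0 eqxx.
Qed.

Lemma Ksupp (x : real_pt R K) : K (supp (sval x)).
Proof. by case: (svalP x). Qed.

Lemma comb_real (x : real_pt R K) r :
  in_real K' (comb r (sval (phi0 x)) (sval (phi1 x))).
Proof.
set a := sval (phi0 x); set b := sval (phi1 x).
have [c0 c1] : 0 <= clamp r /\ clamp r <= 1 by apply/andP; exact: clamp01.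
have [a0 a1] := svalP (phi0 x); have [b0 b1] := svalP (phi1 x).
have fab : finite_set (supp a `|` supp b) by rewrite finite_setU.
split.
- move=> v; rewrite /comb addr_ge0 // mulr_ge0 //; by [rewrite subr_ge0|].
- exact: sub_finite_set (@comb_supp r a b) fab.
- have [s' Ks' hss] := hs (Ksupp x) (ne_of (x:=x) (s:=supp (sval x)) (@subset_refl _ _)).
  apply: hdown Ks' _ => v /comb_supp [] h; [exact: (hss x (subset_refl _)).1|
    exact: (hss x (subset_refl _)).2].
- rewrite (fsbig_widen _ ((supp a `|` supp b) : set {classic V'})) //; last first.
  + by move=> v [_ hv]; apply: supp0.
  + by move=> v /comb_supp.
  rewrite /comb fsbig_split //= -!mulr_fsumr.
  have wa : \sum_(i \in (supp a `|` supp b : set {classic V'})) a i =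
      \sum_(i \in (supp a : set {classic V'})) a i.
    apply/esym/fsbig_widen; first by move=> v; left.
    by move=> v [_ hv]; apply: supp0.
  have wb : \sum_(i \in (supp a `|` supp b : set {classic V'})) b i =
      \sum_(i \in (supp b : set {classic V'})) b i.
    apply/esym/fsbig_widen; first by move=> v; right.
    by move=> v [_ hv]; apply: supp0.
  rewrite wa wb.
  have [_ _ _ ->] := svalP (phi0 x); have [_ _ _ ->] := svalP (phi1 x).
  by rewrite !mulr1 subrK.
Qed.

Definition Hm (p : (real_pt R K * R)%type) : real_pt R K' :=
  exist _ (comb p.2 (sval (phi0 p.1)) (sval (phi1 p.1))) (comb_real p.1 p.2).


Lemma Hm_supp (y : real_pt R K) r s s' : supp (sval y) `<=` s ->
  (forall x : real_pt R K, supp (sval x) `<=` s ->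
    supp (sval (phi0 x)) `<=` s' /\ supp (sval (phi1 x)) `<=` s') ->
  supp (sval (Hm (y, r))) `<=` s'.
Proof.
move=> sy hss v /comb_supp [] h; [exact: (hss y sy).1 | exact: (hss y sy).2].
Qed.

Lemma Hm_est (x y : real_pt R K) r r' e :
  (forall v, `|sval (phi0 y) v - sval (phi0 x) v| < e) ->
  (forall v, `|sval (phi1 y) v - sval (phi1 x) v| < e) ->
  `|r - r'| < e ->
  forall v, `|sval (Hm (y, r')) v - sval (Hm (x, r)) v| < 3 * e.
Proof.
move=> h0 h1 hr v; rewrite /Hm /comb /=.
apply: est; rewrite ?clamp01 ?rp_01 //.
exact: le_lt_trans (clamp_lip _ _) hr.
Qed.

Lemma Hm_cont : continuous Hm.
Proof.
apply/continuousP => U oU.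
have {}oU : @weak_open R V' K' U := oU.
rewrite openE => -[x0 r0] /= Up.
have [s0' Ks0' hss0] := hs (Ksupp x0) (ne_of (x:=x0) (s:=supp (sval x0)) (@subset_refl _ _)).
have [e e0 he] := oU s0' Ks0' (Hm (x0, r0)) Up (Hm_supp (r:=r0) (@subset_refl _ _) hss0).
pose dl := e / 3.
have dl0 : 0 < dl by rewrite divr_gt0.
pose rho := dl / 2.
have rho0 : 0 < rho by rewrite divr_gt0.
have rhodl : rho < dl by rewrite /rho ltr_pdivrMr //; lra.
pose O := [set x : real_pt R K | forall r, `[r0 - rho, r0 + rho]%classic r -> U (Hm (x, r))].
have O0 : O x0.
  move=> r; rewrite /= in_itv /= => /andP[hr1 hr2].
  apply: he; first exact: Hm_supp (@subset_refl _ _) hss0.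
  move=> v _.
  have -> : e = 3 * dl by rewrite /dl mulrC divfK //; apply: lt0r_neq0; lra.
  apply: Hm_est => //; try by move=> w; rewrite subrr normr0.
  rewrite ltr_norml; apply/andP; split; lra.
have Oop : open O.
  suff : @weak_open R V K O by [].
  move=> s Ks x Ox sx.
  have [s' Ks' hss] := hs Ks (ne_of sx).
  pose D (d : R) := [set y : real_pt R K | supp (sval y) `<=` s /\
     forall u, s u -> `|sval y u - sval x u| < d].
  pose F := filter_from [set d : R | 0 < d] D.
  have FF : Filter F.
    apply: filter_from_filter; first by exists 1; exact: ltr01.
    move=> i j i0 j0; exists (Num.min i j).
      by have := lt_min 0 i j; rewrite i0 j0 /= => ->.
    move=> y [sy hy]; split; split => // u su; have := hy u su;
      rewrite lt_min => /andP[a b]; assumption.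
  have cov : forall r, `[r0 - rho, r0 + rho]%classic r ->
     \forall r' \near r & y \near F, U (Hm (y, r')).
    move=> r Ir.
    have [e1 e10 he1] := oU s' Ks' (Hm (x, r)) (Ox r Ir) (Hm_supp (r:=r) sx hss).
    have e30 : 0 < e1 / 3 by rewrite divr_gt0.
    have [d0 d00 hd0] := hc0 Ks sx e30.
    have [d1 d10 hd1] := hc1 Ks sx e30.
    exists (ball r (e1 / 3), D (Num.min d0 d1)).
      split; first exact: nbhsx_ballx.
      exists (Num.min d0 d1) => //.
      by have := lt_min 0 d0 d1; rewrite d00 d10 /= => ->.
    move=> [r' y] [/= br' [sy hy]].
    apply: he1; first exact: Hm_supp sy hss.
    move=> v _.
    have -> : e1 = 3 * (e1 / 3) by rewrite mulrC divfK //; apply: lt0r_neq0; lra.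
    apply: Hm_est.
    + by move=> w; apply: hd0 => // u su; have := hy u su; rewrite lt_min => /andP[a b].
    + by move=> w; apply: hd1 => // u su; have := hy u su; rewrite lt_min => /andP[a b].
    + by move: br'; rewrite -ball_normE /ball_ /=.
  have [d d0 hd] := (compact_near_coveringP _).1 (@segment_compact R (r0 - rho) (r0 + rho))
     _ F (fun y r => U (Hm (y, r))) FF cov.
  by exists d => // y sy hy; apply: (hd y); split.
exists (O, ball r0 rho); first by split; [apply: open_nbhs_nbhs | apply: nbhsx_ballx].
move=> [x r] [/= Ox br]; apply: Ox.
move: br; rewrite -ball_normE /ball_ /= in_itv /= ltr_norml => /andP[h1 h2].
apply/andP; split; lra.
Qed.


Lemma slh : homotopic R phi0 phi1.
Proof.
exists Hm; split.
- apply: continuous_subspaceT; exact: Hm_cont.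
- move=> x; apply: rp_eq; rewrite /= /comb clamp0; apply: funext => v.
  by rewrite subr0 mul1r mul0r addr0.
- move=> x; apply: rp_eq; rewrite /= /comb clamp1; apply: funext => v.
  by rewrite subrr mul0r mul1r add0r.
Qed.

End Homotopy.


Section PMap.
Variables (R : realType) (V V' : Type) (K : set (set V)) (K' : set (set V')).
Variable h : V -> V'.
Hypothesis hdown : forall s s', K' s -> s' `<=` s -> K' s'.
Hypothesis hK : forall s, K s -> s !=set0 -> exists2 s', K' s' & h @` s `<=` s'.

Lemma pmap_real (x : real_pt R K) : in_real K' (push h (sval x)).
Proof.
apply: push_real; first exact: svalP.
have [s' Ks' hs'] := hK (Ksupp x) (ne_of (x:=x) (s:=supp (sval x)) (@subset_refl _ _)).
apply: hdown Ks' _ => v hv; apply: hs'; exact: push_supp hv.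
Qed.

Definition pmap (x : real_pt R K) : real_pt R K' := exist _ _ (pmap_real x).

Lemma pmap_lsupp : lsupp pmap pmap.
Proof.
move=> s Ks ne; have [s' Ks' hs'] := hK Ks ne; exists s' => // x sx.
suff H : supp (sval (pmap x)) `<=` s' by [].
move=> v hv; have [u su <-] := push_supp hv; apply: hs'; exists u => //; exact: sx.
Qed.

Hypothesis hfin : forall s, K s -> finite_set s.

Lemma pmap_lcont : lcont pmap.
Proof. by apply: (lcont_push (h:=h)) => // x. Qed.

Lemma pmap_cont : continuous pmap.
Proof. exact: cont_of pmap_lcont pmap_lsupp. Qed.

End PMap.

Section Dir.
Variables (R : realType) (L W L' W' : Type).
Variables (Lam : L -> W -> \bar R) (Lam' : L' -> W' -> \bar R).
Variables (alpha : \bar R -> \bar R) (C : L -> L' -> Prop) (f : L -> L').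
Hypothesis h1 : forall t s, dnerve Lam t s -> s !=set0 ->
        [/\ finite_set (rimage C s), rimage C s !=set0 &
            dnerve Lam' (alpha t) (rimage C s)].
Hypothesis hf : forall l, C l (f l).

Lemma hKF t : forall s, dnerve Lam t s -> s !=set0 ->
  exists2 s', dnerve Lam' (alpha t) s' & f @` s `<=` s'.
Proof.
move=> s Ks ne; exists (rimage C s); first by case: (h1 Ks ne).
by move=> _ [u su <-]; exists u.
Qed.

Definition Fm t : real_pt R (dnerve Lam t) -> real_pt R (dnerve Lam' (alpha t)) :=
  pmap (@dnerve_down R L' W' Lam' (alpha t)) (@hKF t).

Lemma Fm_cont t : continuous (@Fm t).
Proof. by apply: pmap_cont => s [fs _]. Qed.

Lemma Fm_lcont t : lcont (@Fm t).
Proof. by apply: pmap_lcont => s [fs _]. Qed.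

Lemma Fm_lsupp t : lsupp (@Fm t) (@Fm t).
Proof. exact: pmap_lsupp. Qed.

Lemma Fm_hom1 s t (i1 : dnerve Lam s `<=` dnerve Lam t)
  (i2 : dnerve Lam' (alpha s) `<=` dnerve Lam' (alpha t))
  (mst : (alpha s <= alpha t)%E) :
  homotopic R (@Fm t \o Defs.incl i1) (Defs.incl i2 \o @Fm s).
Proof.
apply: slh.
- exact: dnerve_down.
- move=> s0 Ks0 ne; exists (rimage C s0).
    by apply: (dnerve_mono mst); case: (h1 Ks0 ne).
  move=> x sx; suff H : supp (push f (sval x)) `<=` rimage C s0 by [].
  move=> v hv; have [u su <-] := push_supp hv; exists u => //; exact: sx.
- by apply: (lcont_push (h:=f)) => // s0 [].
- by apply: (lcont_push (h:=f)) => // s0 [].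
Qed.

End Dir.

Section Round.
Variables (R : realType) (L W L' W' : Type).
Variables (Lam : L -> W -> \bar R) (Lam' : L' -> W' -> \bar R).
Variables (alpha alpha' : \bar R -> \bar R) (C : L -> L' -> Prop) (C' : L' -> L -> Prop).
Variables (f : L -> L') (g : L' -> L).
Hypothesis h1 : forall t s, dnerve Lam t s -> s !=set0 ->
        [/\ finite_set (rimage C s), rimage C s !=set0 &
            dnerve Lam' (alpha t) (rimage C s)].
Hypothesis h2 : forall t s, dnerve Lam' t s -> s !=set0 ->
        [/\ finite_set (rimage C' s), rimage C' s !=set0 &
            dnerve Lam (alpha' t) (rimage C' s)].
Hypothesis hf : forall l, C l (f l).
Hypothesis hg : forall l', C' l' (g l').
Hypothesis hfb : forall l, C' (f l) l.

Lemma Fm_hom3 t (i : dnerve Lam t `<=` dnerve Lam (alpha' (alpha t))) :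
  homotopic R (Fm h2 hg (t:=alpha t) \o Fm h1 hf (t:=t)) (Defs.incl i).
Proof.
apply: slh.
- exact: dnerve_down.
- move=> s0 Ks0 ne; have [_ ne1 K1] := h1 Ks0 ne.
  exists (rimage C' (rimage C s0)); first by case: (h2 K1 ne1).
  move=> x sx; split.
  + suff H : supp (push g (push f (sval x))) `<=` rimage C' (rimage C s0) by [].
    move=> v hv; have [u su <-] := push_supp hv.
    have [w sw <-] := push_supp su.
    exists (f w) => //; exists w => //; exact: sx.
  + suff H : supp (sval x) `<=` rimage C' (rimage C s0) by [].
    move=> u su; exists (f u) => //; exists u => //; exact: sx.
- apply: lcont_comp; [exact: Fm_lcont | exact: Fm_lsupp | exact: Fm_lcont].
- by apply: lcont_val.
Qed.

End Round.


End Helpers.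
Import Helpers.
Unset Implicit Arguments. Set Strict Implicit. Set Printing Implicit Defensive.

Theorem corollary7p13 (R : realType) (L W L' W' : Type)
  (Lam : L -> W -> \bar R) (Lam' : L' -> W' -> \bar R)
  (hLam : forall l w, (0 <= Lam l w)%E) (hLam' : forall l w, (0 <= Lam' l w)%E)
  (alpha alpha' : \bar R -> \bar R)
  (ha : forall t, (t <= alpha t)%E) (ha' : forall t, (t <= alpha' t)%E)
  (ma : forall s t, (s <= t)%E -> (alpha s <= alpha t)%E)
  (ma' : forall s t, (s <= t)%E -> (alpha' s <= alpha' t)%E) :
  dowker_interleaved alpha alpha' Lam Lam' ->
  fc_interleaved ha ha' ma ma' (Dowker_nerve Lam) (Dowker_nerve Lam').
Proof.
move=> [C [C' [h1 h2 h3 h4]]].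
have [f hf] := choice h3.
have [g hg] := choice h4.
have hf1 : forall l, C l (f l) by move=> l; case: (hf l).
have hf2 : forall l, C' (f l) l by move=> l; case: (hf l).
have hg1 : forall l, C' l (g l) by move=> l; case: (hg l).
have hg2 : forall l, C (g l) l by move=> l; case: (hg l).
exists (fun t => Fm h1 hf1 (t:=t)), (fun t => Fm h2 hg1 (t:=t)).
split; first by move=> t; apply: Fm_cont.
split; first by move=> t; apply: Fm_cont.
split.
- by move=> s t h; apply: Fm_hom1; apply: ma.
- by move=> s t h; apply: Fm_hom1; apply: ma'.
- by move=> t; apply: Fm_hom3.
- by move=> t; apply: Fm_hom3.
Qed.
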